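(* Let $r\ge 2$, let $\lambda,\mu\in\Lambda$ with $\lambda\sim_e\mu$, and let $s\in\mathbb{Z}$. Then $\eta(\lambda,s)\approx_r\eta(\mu,s)$ (in $\mathcal{A}_r^e$) if and only if $\Phi_r(\lambda,s)\approx_e\Phi_r(\mu,s)$ (in $\mathcal{A}_e^r$).
   Context: Fix an integer $e\ge 2$. A partition is a weakly decreasing sequence $\lambda=(\lambda_1,\lambda_2,\dots)$ of non-negative integers with finite sum $|\lambda|$; $\Lambda$ denotes the set of partitions and $\Lambda^{(m)}$ the set of $m$-multipartitions, i.e. $m$-tuples $\boldsymbol\lambda=(\lambda^{(1)},\dots,\lambda^{(m)})$ of partitions, with $|\boldsymbol\lambda|=\sum_k|\lambda^{(k)}|$. A $\beta$-set is a subset $B\subseteq\mathbb{Z}$ containing all sufficiently small integers and no sufficiently large ones. For $\lambda\in\Lambda$ and $s\in\mathbb{Z}$ set $B_s(\lambda)=\{\lambda_i-i+s : i\ge 1\}$; every $\beta$-set equals $B_s(\lambda)$ for a unique pair $(\lambda,s)$. For $N\ge 2$ let $\mathcal{A}_N=\Lambda\times\mathbb{Z}$ (abacus configurations with $N$ runners) and $\mathcal{A}_N^m=\Lambda^{(m)}\times\mathbb{Z}^m$, where $(\boldsymbol\lambda,\mathbf{s})$ is identified with the $m$-tuple of $\beta$-sets $(B_{s_1}(\lambda^{(1)}),\dots,B_{s_m}(\lambda^{(m)}))$. Blocks: for $(\boldsymbol\lambda,\mathbf{s})\in\mathcal{A}_N^m$, its $N$-residue multiset is the multiset of the values $s_k+y-x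 \bmod N$ over all nodes $(x,y,k)$ with $x\ge1$, $1\le y\le\lambda^{(k)}_x$, $1\le k\le m$. Define $(\boldsymbol\lambda,\mathbf{s})\approx_N(\boldsymbol\mu,\mathbf{s}')$ iff $\mathbf{s}=\mathbf{s}'$, $|\boldsymbol\lambda|=|\boldsymbol\mu|$ and the $N$-residue multisets coincide. Its equivalence classes are called blocks. The map $\eta$: for $(\lambda,s)\in\mathcal{A}_e$ with $B=B_s(\lambda)$ and $0\le i<e$, the set $C_i=\{(b-i)/e : b\in B,\ b\equiv i \bmod e\}$ is a $\beta$-set, so $C_i=B_{t_i}(\rho_i)$ for a unique $(\rho_i,t_i)\in\Lambda\times\mathbb{Z}$; set $\eta(\lambda,s)=((\rho_0,\dots,\rho_{e-1}),(t_0,\dots,t_{e-1}))\in\Lambda^{(e)}\times\mathbb{Z}^e$, which we also regard as an element of $\mathcal{A}_r^e$. The $e$-weight of $\lambda$ is $\mathrm{wt}(\lambda)=\sum_i|\rho_i|$. For $\lambda,\mu\in\Lambda$ write $\lambda\sim_e\mu$ if $(\lambda,s)\approx_e(\mu,s)$ for some (equivalently any) $s\in\mathbb{Z}$. Uglov's map: for $1\le k\le r$ define $\psi_k:\mathbb{Z}\to\mathbb{Z}$ by $\psi_k(ae+i)=((a+1)r-k)e+i$ for $a\in\mathbb{Z}$, $0\le i<e$. For $(\boldsymbol\lambda,\mathbf{s})\in\mathcal{A}_e^r$ the set $B=\bigsqcup_{k=1}^r\psi_k(B_{s_k}(\lambda^{(k)}))$ is a $\beta$-set, and $\Psi_r(\boldsymbol\lambda,\mathbf{s})$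 is the unique $(\tilde\lambda,\tilde s)\in\mathcal{A}_e$ with $B_{\tilde s}(\tilde\lambda)=B$. $\Psi_r:\mathcal{A}_e^r\to\mathcal{A}_e$ is a bijection; $\Phi_r=\Psi_r^{-1}$. *)

(* Defs.v *)
From Stdlib Require Import ClassicalEpsilon.
From mathcomp Require Import all_boot all_order all_algebra.
Unset Printing Implicit Defensive.
Import Order.TTheory GRing.Theory Num.Theory.
Local Open Scope ring_scope.

(* Partitions: finite weakly decreasing sequences of positive integers
   (the trailing zeros of lambda = (lambda_1, lambda_2, ...) are omitted). *)
Definition is_part (l : seq nat) : bool := sorted geq l && (0%N \notin l).
Definition Partition := {l : seq nat | is_part l}.

Lemma is_part_nil : is_part [::]. Proof. by []. Qed.
Definition empty_part : Partition := exist _ [::] is_part_nil.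

(* lambda_i, 1-indexed; 0 beyond the length *)
Definition part_nth (p : Partition) (i : nat) : nat := nth 0%N (sval p) i.-1.
Definition psize (p : Partition) : nat := sumn (sval p).

Definition beta (s : int) (p : Partition) : int -> Prop :=
  fun b => exists i : nat, (1 <= i)%N /\ b = (part_nth p i)%:Z - i%:Z + s.

(* m-multipartitions and multicharges; component k (1 <= k <= m) is index k-1 *)
Definition mpart (m : nat) := {ffun 'I_m -> Partition}.
Definition mcharge (m : nat) := {ffun 'I_m -> int}.
Definition conf := (Partition * int)%type.
Definition mconf (m : nat) := (mpart m * mcharge m)%type.

Definition mpsize m (l : mpart m) : nat := \sum_(k < m) psize (l k).

Definition res_seq1 (N : nat) (p : Partition) (s : int) : seq int :=
  [seq ((s + y%:Z - x%:Z) %% N%:Z)%Z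
     | x <- iota 1 (size (sval p)), y <- iota 1 (part_nth p x)].

(* N-residue multiset (as a sequence, compared up to permutation) *)
Definition res_seq (N m : nat) (c : mconf m) : seq int :=
  flatten [seq res_seq1 N (c.1 k) (c.2 k) | k <- enum 'I_m].

Definition block_eq (N m : nat) (c d : mconf m) : Prop :=
  c.2 = d.2 /\ mpsize m c.1 = mpsize m d.1 /\ perm_eq (res_seq N m c) (res_seq N m d).

Definition block_eq1 (N : nat) (c d : conf) : Prop :=
  c.2 = d.2 /\ psize c.1 = psize d.1 /\
  perm_eq (res_seq1 N c.1 c.2) (res_seq1 N d.1 d.2).

Definition sim_e (e : nat) (l m : Partition) : Prop :=
  exists s : int, block_eq1 e (l, s) (m, s).

Definition default_mconf (m : nat) : mconf m :=
  ([ffun => empty_part], [ffun => 0]).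

Definition Cset (e : nat) (B : int -> Prop) (i : nat) : int -> Prop :=
  fun c => exists b, B b /\ (b %% e%:Z)%Z = i%:Z /\ c = ((b - i%:Z) %/ e%:Z)%Z.

Definition eta (e : nat) (c : conf) : mconf e :=
  epsilon (inhabits (default_mconf e))
    (fun rt : mconf e => forall i : 'I_e, forall z : int,
        beta (rt.2 i) (rt.1 i) z <-> Cset e (beta c.2 c.1) i z).

Definition psi (e r k : nat) (z : int) : int :=
  ((((z %/ e%:Z)%Z + 1) * r%:Z - k%:Z) * e%:Z + (z %% e%:Z)%Z).

Definition Uglov_set (e r : nat) (c : mconf r) : int -> Prop :=
  fun b => exists (k : 'I_r) (z : int),
      beta (c.2 k) (c.1 k) z /\ b = psi e r k.+1 z.

Definition Psi (e r : nat) (c : mconf r) : conf :=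
  epsilon (inhabits (empty_part, 0))
    (fun p : conf => forall b, beta p.2 p.1 b <-> Uglov_set e r c b).

Definition Phi (e r : nat) (p : conf) : mconf r :=
  epsilon (inhabits (default_mconf r)) (fun c : mconf r => Psi e r c = p).

(* Main.v *)
Require Import Defs.
From Stdlib Require Import ClassicalEpsilon.
From mathcomp Require Import all_boot all_order all_algebra zify.
Import Order.TTheory GRing.Theory Num.Theory.
Set Implicit Arguments.
Unset Strict Implicit.
Local Open Scope ring_scope.


Definition pb (P : Prop) : bool := if excluded_middle_informative P then true else false.
Lemma pbP (P : Prop) : reflect P (pb P).
Proof. rewrite /pb; case: excluded_middle_informative => h; by constructor. Qed.
Definition ind (P : Prop) : int := (pb P)%:Z.
Lemma indT (P : Prop) : P -> ind P = 1.
Proof. by rewrite /ind; case: pbP. Qed.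
Lemma indF (P : Prop) : ~ P -> ind P = 0.
Proof. by rewrite /ind; case: pbP. Qed.
Lemma ind_iff (P Q : Prop) : (P <-> Q) -> ind P = ind Q.
Proof. move=> h; rewrite /ind; case: pbP; case: pbP; tauto. Qed.

Definition fb (p : Partition) (s : int) (i : nat) : int := (part_nth p i)%:Z - i%:Z + s.

Lemma part_nth_gt p i : (size (sval p) < i)%N -> part_nth p i = 0%N.
Proof. move=> h; rewrite /part_nth nth_default //; lia. Qed.

Lemma part_nth_le p i j : (i <= j)%N -> (part_nth p j <= part_nth p i)%N.
Proof.
case: p => l hp /= hij; case/andP: (hp) => hs _; rewrite /part_nth /=.
have hij' : (i.-1 <= j.-1)%N by lia.
case: (ltnP j.-1 (size l)) => hj.
  have := @sorted_leq_nth _ geq (fun a b c h1 h2 => leq_trans h2 h1) leqnn 0%N l hs.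
  move=> /(_ i.-1 j.-1); rewrite !inE => H; apply: H => //; lia.
by rewrite (nth_default _ hj).
Qed.

Lemma part_nth_pos p i : (1 <= i)%N -> (i <= size (sval p))%N -> (0 < part_nth p i)%N.
Proof.
case: p => l hp /= h1 h2; case/andP: (hp) => _ h0; rewrite /part_nth /=.
have : nth 0%N l i.-1 \in l.
  apply: mem_nth; move: h2; rewrite /=; lia.
case: (nth 0%N l i.-1) => //; by rewrite (negbTE h0).
Qed.

Lemma fb_lt p s i j : (i < j)%N -> fb p s j < fb p s i.
Proof. move=> h; rewrite /fb; have := @part_nth_le p i j (ltnW h); lia. Qed.

Lemma fb_inj p s i j : fb p s i = fb p s j -> i = j.
Proof.
move=> h; case: (ltngtP i j) => // hij.
- by have := fb_lt p s hij; rewrite h ltxx.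
- by have := fb_lt p s hij; rewrite h ltxx.
Qed.

Definition Kp (p : Partition) (s : int) : nat := (`|s| + size (sval p) + part_nth p 1)%N.

Definition bounded (P : int -> Prop) (K : nat) :=
  (forall b, b < - K%:Z -> P b) /\ (forall b, K%:Z <= b -> ~ P b).

Lemma bounded_mono P K K' : (K <= K')%N -> bounded P K -> bounded P K'.
Proof. move=> h [h1 h2]; split=> b hb; [apply: h1 | apply: h2]; lia. Qed.

Lemma beta_bounded p s K : (Kp p s <= K)%N -> bounded (beta s p) K.
Proof.
rewrite /Kp => hK; split=> b hb.
  exists `|s - b|%N; split; first lia.
  rewrite part_nth_gt; lia.
move=> [i [hi hbi]]; rewrite hbi in hb.
have := @part_nth_le p 1 i hi; lia.
Qed.

Definition isum (M : int) (n : nat) (F : int -> int) : int := \sum_(k < n) F (M + k%:Z).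

Lemma sumU p s (L : nat) b : (size (sval p) <= L)%N -> s - L%:Z <= b ->
  \sum_(x < L) ((fb p s x.+1 == b) : int) = ind (beta s p b).
Proof.
move=> hL hb; case: (pbP (beta s p b)) => hB; last first.
  rewrite indF // big1 // => x _; case: eqP => // h; case: hB.
  by exists x.+1.
rewrite indT //; case: hB => i [hi hbi].
have hiL : (i <= L)%N.
  case: (leqP i L) => // hiL; move: hbi; rewrite part_nth_gt; lia.
have hi' : (i.-1 < L)%N by lia.
rewrite (bigD1 (Ordinal hi')) //= big1 => [|x hx].
  have -> : i.-1.+1 = i by lia.
  by rewrite /fb -hbi eqxx addr0.
case: eqP => // h; move: hx; rewrite hbi in h.
move/fb_inj: h => h; case/eqP; apply: val_inj => /=; lia.
Qed.

Lemma sumK p s (K : nat) h : (Kp p s <= K)%N ->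
  \sum_(x < absz (s + K%:Z)) h (fb p s x.+1) =
  isum (- K%:Z) (K + K) (fun b => ind (beta s p b) * h b).
Proof.
rewrite /Kp => hK; set L := absz (s + K%:Z).
rewrite /isum.
have E : forall k : 'I_(K+K), ind (beta s p (- K%:Z + k%:Z)) * h (- K%:Z + k%:Z) =
   \sum_(x < L) ((fb p s x.+1 == - K%:Z + k%:Z) : int) * h (fb p s x.+1).
  move=> k; rewrite -(@sumU p s L); [|lia|lia].
  rewrite mulr_suml; apply: eq_bigr => x _; case: eqP => [->|] //; by rewrite !mul0r.
rewrite (eq_bigr _ (fun k _ => E k)) exchange_big /=; apply: eq_bigr => x _.
have hx : (0 <= fb p s x.+1 + K%:Z) && (fb p s x.+1 + K%:Z < (K + K)%:Z).
  have := @part_nth_le p 1 x.+1 isT; have := ltn_ord x; rewrite /fb /L; lia.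
have hk : (absz (fb p s x.+1 + K%:Z)%R < K + K)%N by lia.
rewrite (bigD1 (Ordinal hk)) //= big1 => [|k hk'].
  have -> : - K%:Z + (absz (fb p s x.+1 + K%:Z))%:Z = fb p s x.+1 by lia.
  by rewrite eqxx mul1r addr0.
case: eqP => h'; last by rewrite mul0r.
case/eqP: hk'; apply: val_inj => /=; lia.
Qed.

Lemma div_step (z : int) (N : nat) : (0 < N)%N -> ((z+1) %/ N)%Z = (z %/ N)%Z + ((z+1) %% N == 0)%Z%:Z.
Proof. move=> hN. case: eqP => h /=; nia. Qed.

Lemma mod_sub (a j : int) (N : nat) : (0 < N)%N -> 0 <= j < N%:Z -> (((a - j) %% N)%Z == 0) = ((a %% N)%Z == j).
Proof. move=> hN hj. rewrite -modzDml.
have h1 : (0 <= (a %% N)%Z) by rewrite modz_ge0 //; lia.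
have h2 : ((a %% N)%Z < N%:Z) by rewrite ltz_pmod //; lia.
move: (a %% N)%Z h1 h2 => r h1 h2.
case: (lerP j r) => hr.
  rewrite modz_small; [|lia]; apply/eqP/eqP; lia.
have -> : (r - j = (-1) * N%:Z + (r - j + N%:Z))%R by lia.
rewrite modzMDl modz_small; [|lia]. apply/eqP/eqP; lia. Qed.

Lemma divCI (c i : int) (e : nat) : (0 < e)%N -> 0 <= i < e%:Z -> ((c * e%:Z + i) %/ e%:Z)%Z = c.
Proof. move=> he hi; rewrite divzMDl ?divz_small ?addr0 //; lia. Qed.
Lemma modCI (c i : int) (e : nat) : (0 < e)%N -> 0 <= i < e%:Z -> ((c * e%:Z + i) %% e%:Z)%Z = i.
Proof. move=> he hi; rewrite modzMDl modz_small //; lia. Qed.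


Definition phi (N : nat) (j : int) (z : int) : int := ((z - j) %/ N%:Z)%Z.

Lemma row_count N j (s x : int) m : (0 < N)%N -> 0 <= j < N%:Z ->
  (count_mem j [seq ((s + y%:Z - x) %% N%:Z)%Z | y <- iota 1 m])%:Z =
  phi N j (s - x + m%:Z) - phi N j (s - x).
Proof.
move=> hN hj; elim: m => [|m IH]; first by rewrite /= addr0 subrr.
have -> : iota 1 m.+1 = iota 1 m ++ [:: m.+1] by have := iotaD 1 m 1; rewrite addn1 add1n.
rewrite map_cat count_cat PoszD IH /= addn0.
rewrite /phi; have -> : s - x + m.+1%:Z - j = (s - x + m%:Z - j) + 1 by lia.
rewrite div_step //; have -> : (s - x + m%:Z - j + 1) = (s + m.+1%:Z - x) - j by lia.
rewrite mod_sub //; case: eqP => _ /=; lia.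
Qed.

Lemma sumn_iota (F : nat -> nat) n :
  (sumn [seq F x | x <- iota 1 n])%:Z = \sum_(x < n) (F x.+1)%:Z.
Proof.
elim: n => [|n IH]; first by rewrite big_ord0.
have -> : iota 1 n.+1 = iota 1 n ++ [:: n.+1] by have := iotaD 1 n 1; rewrite addn1 add1n.
by rewrite map_cat sumn_cat PoszD IH big_ord_recr /= addn0.
Qed.

Lemma res_count N j p s : (0 < N)%N -> 0 <= j < N%:Z ->
  (count_mem j (res_seq1 N p s))%:Z =
  \sum_(x < size (sval p)) (phi N j (fb p s x.+1) - phi N j (s - x.+1%:Z)).
Proof.
move=> hN hj; rewrite /res_seq1 count_flatten -map_comp sumn_iota.
apply: eq_bigr => x _ /=; rewrite row_count //; congr (phi _ _ _ - _); rewrite /fb; lia.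
Qed.

Lemma res_countL N j p s L : (0 < N)%N -> 0 <= j < N%:Z -> (size (sval p) <= L)%N ->
  (count_mem j (res_seq1 N p s))%:Z =
  \sum_(x < L) (phi N j (fb p s x.+1) - phi N j (s - x.+1%:Z)).
Proof.
move=> hN hj hL; rewrite res_count // -(subnKC hL) big_split_ord /=.
rewrite [X in _ = _ + X]big1 ?addr0 // => x _.
rewrite /fb part_nth_gt /=; last lia.
have -> : (0%Z - (size (sval p) + x).+1%:Z + s) = s - (size (sval p) + x).+1%:Z by lia.
by rewrite subrr.
Qed.


Definition Dl (P P' : int -> Prop) (K : nat) (h : int -> int) : int :=
  isum (- K%:Z) (K + K) (fun b => (ind (P b) - ind (P' b)) * h b).

Lemma DlD P P' K h1 h2 : Dl P P' K (fun b => h1 b + h2 b) = Dl P P' K h1 + Dl P P' K h2.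
Proof. rewrite /Dl /isum -big_split /=; apply: eq_bigr => k _; by rewrite mulrDr. Qed.
Lemma DlN P P' K h : Dl P P' K (fun b => - h b) = - Dl P P' K h.
Proof. rewrite /Dl /isum -sumrN; apply: eq_bigr => k _; by rewrite mulrN. Qed.
Lemma DlB P P' K h1 h2 : Dl P P' K (fun b => h1 b - h2 b) = Dl P P' K h1 - Dl P P' K h2.
Proof. by rewrite DlD DlN. Qed.
Lemma DlC P P' K c : Dl P P' K (fun b => c) = c * Dl P P' K (fun b => 1).
Proof. rewrite /Dl /isum mulr_sumr; apply: eq_bigr => k _; by rewrite mulr1 mulrC. Qed.
Lemma Dl_ext P P' K h1 h2 : (forall b, h1 b = h2 b) -> Dl P P' K h1 = Dl P P' K h2.
Proof. move=> h; rewrite /Dl /isum; apply: eq_bigr => k _; by rewrite h. Qed.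
Lemma Dl_extP P1 P1' P2 P2' K h : (forall b, P1 b <-> P2 b) -> (forall b, P1' b <-> P2' b) ->
  Dl P1 P1' K h = Dl P2 P2' K h.
Proof. move=> h1 h2; rewrite /Dl /isum; apply: eq_bigr => k _; by rewrite (ind_iff (h1 _)) (ind_iff (h2 _)). Qed.

Lemma count_diff N j p p' t K : (0 < N)%N -> 0 <= j < N%:Z ->
  (Kp p t <= K)%N -> (Kp p' t <= K)%N ->
  (count_mem j (res_seq1 N p t))%:Z - (count_mem j (res_seq1 N p' t))%:Z =
  Dl (beta t p) (beta t p') K (phi N j).
Proof.
move=> hN hj hK hK'.
rewrite (@res_countL N j p t (absz (t + K%:Z))) //; last by move: hK; rewrite /Kp; lia.
rewrite (@res_countL N j p' t (absz (t + K%:Z))) //; last by move: hK'; rewrite /Kp; lia.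
rewrite !sumrB sumK // sumK // opprB addrA subrK /Dl /isum -sumrB.
apply: eq_bigr => k _; by rewrite mulrBl.
Qed.

Lemma charge_sum p t K : (Kp p t <= K)%N ->
  isum (- K%:Z) (K + K) (fun b => ind (beta t p b)) = t + K%:Z.
Proof.
move=> hK; transitivity (isum (- K%:Z) (K + K) (fun b => ind (beta t p b) * 1)).
  by apply: eq_bigr => k _; rewrite mulr1.
rewrite -(sumK (fun _ => 1) hK) sumr_const card_ord; move: hK; rewrite /Kp => hK.
rewrite -mulr_natl mulr1; lia.
Qed.

Lemma charge_diff p p' t t' K : (Kp p t <= K)%N -> (Kp p' t' <= K)%N ->
  t - t' = Dl (beta t p) (beta t' p') K (fun _ => 1).
Proof.
move=> h h'; have -> : t - t' = (t + K%:Z) - (t' + K%:Z) by lia.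
rewrite -(charge_sum h) -(charge_sum h') /Dl /isum -sumrB.
apply: eq_bigr => k _; by rewrite mulr1.
Qed.

Lemma RI (F : int -> int) (M : int) (n m : nat) :
  \sum_(k < n * m) F (M * m%:Z + k%:Z) = \sum_(a < n) \sum_(i < m) F ((M + a%:Z) * m%:Z + i%:Z).
Proof.
elim: n => [|n IH]; first by rewrite mul0n !big_ord0.
rewrite mulSnr big_split_ord /= IH big_ord_recr /=; congr (_ + _).
apply: eq_bigr => i _; congr F; lia.
Qed.

Lemma Dl_grow P P' K0 K h : bounded P K0 -> bounded P' K0 -> (K0 <= K)%N ->
  Dl P P' K h = Dl P P' K0 h.
Proof.
move=> [l1 h1] [l2 h2] hK; rewrite /Dl /isum.
have -> : (K + K = (K - K0) + ((K0 + K0) + (K - K0)))%N by lia.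
rewrite big_split_ord big_split_ord /=.
rewrite big1 ?add0r => [|k _]; last first.
  set b := (X in ind (P X)).
  have hb : b < - K0%:Z by rewrite /b; have := ltn_ord k; lia.
  by rewrite (indT (l1 _ hb)) (indT (l2 _ hb)) subrr mul0r.
rewrite [X in _ + X]big1 ?addr0 => [|k _]; last first.
  set b := (X in ind (P X)).
  have hb : K0%:Z <= b by rewrite /b; lia.
  by rewrite (indF (h1 _ hb)) (indF (h2 _ hb)) subrr mul0r.
apply: eq_bigr => k _.
have -> : (- K%:Z + (K - K0 + k)%N%:Z) = - K0%:Z + k%:Z by lia.
done.
Qed.

Lemma eta_transfer (e K : nat) (B B' : int -> Prop) (C C' : nat -> int -> Prop)
  (g : nat -> int -> int) : (0 < e)%N ->
  (forall i c, (i < e)%N -> (C i c <-> B (c * e%:Z + i%:Z))) ->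
  (forall i c, (i < e)%N -> (C' i c <-> B' (c * e%:Z + i%:Z))) ->
  \sum_(i < e) Dl (C i) (C' i) K (g i) =
  Dl B B' (K * e) (fun b => g (absz (b %% e%:Z)%Z) (b %/ e%:Z)%Z).
Proof.
move=> he hC hC'; rewrite /Dl /isum exchange_big /=.
set F := fun b => (ind (B b) - ind (B' b)) * g (absz (b %% e%:Z)%Z) (b %/ e%:Z)%Z.
have -> : (K * e + K * e = (K + K) * e)%N by rewrite mulnDl.
transitivity (\sum_(k < (K+K)*e) F ((- K%:Z) * e%:Z + k%:Z)); last first.
  apply: eq_bigr => k _; rewrite /F; congr (_ * _); by rewrite PoszM mulNr.
rewrite RI; apply: eq_bigr => a _; apply: eq_bigr => i _; rewrite /F.
rewrite (ind_iff (hC _ _ (ltn_ord i))) (ind_iff (hC' _ _ (ltn_ord i))).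
have hi := ltn_ord i.
rewrite modCI ?divCI //; lia.
Qed.

Definition kid (e r : nat) (b : int) : nat := (r.-1 - absz ((b %/ e%:Z)%Z %% r%:Z)%Z)%N.
Definition zid (e r : nat) (b : int) : int := ((b %/ e%:Z)%Z %/ r%:Z)%Z * e%:Z + (b %% e%:Z)%Z.

Lemma psi_inv e r k z : (0 < e)%N -> (k < r)%N ->
  kid e r (psi e r k.+1 z) = k /\ zid e r (psi e r k.+1 z) = z.
Proof.
move=> he hk; rewrite /kid /zid /psi.
have hm : 0 <= (z %% e%:Z)%Z < e%:Z.
  by rewrite modz_ge0 ?ltz_pmod //=; lia.
rewrite (divCI _ he hm) (modCI _ he hm).
have -> : ((z %/ e%:Z)%Z + 1) * r%:Z - k.+1%:Z = (z %/ e%:Z)%Z * r%:Z + (r.-1 - k)%N%:Z by lia.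
have hr : (0 < r)%N by lia.
have hk' : 0 <= (r.-1 - k)%N%:Z < r%:Z by lia.
rewrite (divCI _ hr hk') (modCI _ hr hk').
split; first lia.
by rewrite -divz_eq.
Qed.

Lemma psi_at e r (j : 'I_r) (c i : int) : (0 < e)%N -> 0 <= i < e%:Z ->
  psi e r (rev_ord j).+1 (c * e%:Z + i) = (c * r%:Z + j%:Z) * e%:Z + i.
Proof.
move=> he hi; rewrite /psi divCI // modCI //.
have := ltn_ord j; rewrite /= => hj.
have -> : (r - j.+1).+1%:Z = r%:Z - j%:Z by lia.
lia.
Qed.

Lemma phi_transfer (e r K : nat) (B B' : int -> Prop) (D D' : nat -> int -> Prop)
  (g : nat -> int -> int) : (0 < e)%N -> (0 < r)%N ->
  (forall k z, (k < r)%N -> (D k z <-> B (psi e r k.+1 z))) ->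
  (forall k z, (k < r)%N -> (D' k z <-> B' (psi e r k.+1 z))) ->
  \sum_(k < r) Dl (D k) (D' k) (K * e) (g k) =
  Dl B B' (K * r * e) (fun b => g (kid e r b) (zid e r b)).
Proof.
move=> he hr hD hD'.
set F := fun b => (ind (B b) - ind (B' b)) * g (kid e r b) (zid e r b).
have step1 : forall k : 'I_r, Dl (D k) (D' k) (K * e) (g k) =
   \sum_(a < K + K) \sum_(i < e) F (psi e r k.+1 ((- K%:Z + a%:Z) * e%:Z + i%:Z)).
  move=> k; rewrite /Dl /isum.
  have -> : (K * e + K * e = (K + K) * e)%N by rewrite mulnDl.
  transitivity (\sum_(m < (K+K)*e) (fun b => (ind (D k b) - ind (D' k b)) * g k b)
                   ((- K%:Z) * e%:Z + m%:Z)).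
    by apply: eq_bigr => m _; rewrite PoszM mulNr.
  rewrite (RI (fun b => (ind (D k b) - ind (D' k b)) * g k b)); apply: eq_bigr => a _; apply: eq_bigr => i _ /=.
  rewrite /F (ind_iff (hD _ _ (ltn_ord k))) (ind_iff (hD' _ _ (ltn_ord k))).
  by case: (psi_inv ((- K%:Z + a%:Z) * e%:Z + i%:Z) he (ltn_ord k)) => -> ->.
rewrite (eq_bigr _ (fun k _ => step1 k)) exchange_big /=.
transitivity (\sum_(a < K + K) \sum_(j < r) \sum_(i < e)
     F (((- K%:Z + a%:Z) * r%:Z + j%:Z) * e%:Z + i%:Z)).
  apply: eq_bigr => a _; rewrite (reindex_inj rev_ord_inj) /=.
  apply: eq_bigr => j _; apply: eq_bigr => i _.
  rewrite psi_at //; have := ltn_ord i; lia.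
transitivity (\sum_(a < K + K) \sum_(t < r * e) F ((- K%:Z + a%:Z) * (r * e)%N%:Z + t%:Z)).
  apply: eq_bigr => a _; rewrite -RI; apply: eq_bigr => t _; congr F; rewrite PoszM; lia.
rewrite -RI /Dl /isum.
have -> : (K * r * e + K * r * e = (K + K) * (r * e))%N by rewrite -mulnA mulnDl.
apply: eq_bigr => t _.
have -> : - K%:Z * (r * e)%N%:Z + t%:Z = - (K * r * e)%N%:Z + t%:Z by rewrite !PoszM; nia.
done.
Qed.


Lemma fb_eq_all p s p' s' : (forall b, beta s p b <-> beta s' p' b) ->
  forall i, (1 <= i)%N -> fb p s i = fb p' s' i.
Proof.
move=> hB i; elim: i {-2}i (leqnn i) => [|n IH] i hi h1; first lia.
have IH' : forall j, (1 <= j)%N -> (j < i)%N -> fb p s j = fb p' s' j.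
  move=> j hj1 hj2; apply: IH => //; lia.
case: (ltgtP (fb p s i) (fb p' s' i)) => // hlt.
- have : beta s p (fb p' s' i) by apply/hB; exists i.
  move=> [k [hk1 hk]].
  have hki : (k < i)%N.
    case: (ltngtP k i) => // hik.
      by have := fb_lt p s hik; rewrite /fb in hlt hk *; lia.
    by rewrite hik in hk; rewrite /fb in hlt hk; lia.
  have e1 : fb p s k = fb p' s' i by rewrite hk.
  have := IH' k hk1 hki; rewrite e1 => /esym /fb_inj; lia.
- have : beta s' p' (fb p s i) by apply/hB; exists i.
  move=> [k [hk1 hk]].
  have hki : (k < i)%N.
    case: (ltngtP k i) => // hik.
      by have := fb_lt p' s' hik; rewrite /fb in hlt hk *; lia.
    by rewrite hik in hk; rewrite /fb in hlt hk; lia.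
  have e1 : fb p' s' k = fb p s i by rewrite hk.
  have := IH' k hk1 hki; rewrite e1 => /fb_inj; lia.
Qed.

Lemma part_eq (p p' : Partition) : (forall i, (1 <= i)%N -> part_nth p i = part_nth p' i) -> p = p'.
Proof.
move=> h; apply: val_inj.
have h' : forall n, nth 0%N (sval p) n = nth 0%N (sval p') n.
  by move=> n; have := h n.+1 isT; rewrite /part_nth.
have hs : size (sval p) = size (sval p').
  apply/eqP; rewrite eqn_leq; apply/andP; split; rewrite leqNgt; apply/negP => hlt.
  - have := @part_nth_pos p (size (sval p')).+1 isT hlt.
    by rewrite h // part_nth_gt.
  - have := @part_nth_pos p' (size (sval p)).+1 isT hlt.
    by rewrite -h // part_nth_gt.
by apply: (eq_from_nth hs) => n _; apply: h'.
Qed.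

Lemma beta_inj p s p' s' : (forall b, beta s p b <-> beta s' p' b) -> s = s' /\ p = p'.
Proof.
move=> hB; have hf := fb_eq_all hB.
set i := (size (sval p) + size (sval p')).+1.
have := hf i isT; rewrite /fb !part_nth_gt; [|rewrite /i; lia|rewrite /i; lia].
move=> hs; have hs' : s = s' by lia.
split => //; apply: part_eq => j hj; have := hf j hj; rewrite /fb hs'; lia.
Qed.

Lemma part_zero (p : Partition) i : part_nth p 1 = 0%N -> part_nth p i = 0%N.
Proof.
move=> h; case: (leqP i (size (sval p))) => hi; last by rewrite part_nth_gt.
case: (posnP (size (sval p))) => hs; first by rewrite /part_nth nth_default // hs.
by have := @part_nth_pos p 1 isT hs; rewrite h.
Qed.

Lemma part_cons (p' : Partition) (v : nat) : (part_nth p' 1 <= v)%N ->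
  exists p : Partition, part_nth p 1 = v /\ forall i, (1 <= i)%N -> part_nth p i.+1 = part_nth p' i.
Proof.
move=> hv; case: (posnP v) => [v0|vpos].
  exists p'; split; first lia.
  have h0 : part_nth p' 1 = 0%N by lia.
  by move=> i _; rewrite (part_zero i.+1 h0) (part_zero i h0).
have hp : is_part (v :: sval p').
  have := svalP p'; rewrite /is_part => /andP [hs h0].
  rewrite /part_nth /= in hv.
  apply/andP; split; last by rewrite inE negb_or h0 andbT; lia.
  move: hs hv; case: (sval p') => //= x l' hs hv.
  by rewrite hs andbT.
exists (exist (fun l => is_part l) (v :: sval p') hp); split; first by [].
move=> i hi; rewrite /part_nth /=; case: i hi => // i _.
Qed.

Lemma beta_top (p' : Partition) s' b0 : (forall x, beta s' p' x -> x < b0) ->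
  exists p, forall b, beta (s' + 1) p b <-> (beta s' p' b \/ b = b0).
Proof.
move=> h; have := h (fb p' s' 1) (ex_intro _ 1%N (conj isT erefl)).
rewrite /fb => h1.
have [p [hp1 hp2]] := @part_cons p' (absz (b0 - s')) ltac:(lia).
exists p => b; split.
- move=> [i [hi ->]]; case: i hi => // [[|i]] _.
    by right; rewrite hp1; lia.
  left; exists i.+1; split => //; rewrite hp2 //; lia.
- move=> [[i [hi ->]]|->].
    exists i.+1; split => //; rewrite hp2 //; lia.
  exists 1%N; split => //; rewrite hp1; lia.
Qed.

Lemma beta_empty s b : beta s empty_part b <-> b < s.
Proof.
split.
- move=> [i [hi ->]]; rewrite /part_nth /= nth_nil; lia.
- move=> hb; exists (absz (s - b)); split; first lia.
  rewrite /part_nth /= nth_nil; lia.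
Qed.

Lemma exists_beta_lohi (n : nat) : forall (P : int -> Prop) (lo hi : int),
  hi - lo <= n%:Z -> (forall b, b < lo -> P b) -> (forall b, hi <= b -> ~ P b) ->
  exists s p, forall b, beta s p b <-> P b.
Proof.
elim: n => [|n IH] P lo hi hn hlo hhi.
  exists lo, empty_part => b; rewrite beta_empty; split; first exact: hlo.
  move=> hb; case: (ltrP b lo) => // hb'; case: (hhi b) => //; lia.
case: (ltrP lo hi) => hlh; last first.
  exists lo, empty_part => b; rewrite beta_empty; split; first exact: hlo.
  move=> hb; case: (ltrP b lo) => // hb'; case: (hhi b) => //; lia.
case: (classic (P (hi - 1))) => hP; last first.
  apply: (IH P lo (hi - 1)) => //; first lia.
  move=> b hb; case: (eqVneq b (hi - 1)) => [->//|hne]; apply: hhi; lia.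
have [s' [p' hQ]] := IH (fun b => P b /\ b <> hi - 1) lo (hi - 1) ltac:(lia)
   ltac:(move=> b hb; split; [exact: hlo| lia])
   ltac:(move=> b hb [hPb hb']; case: (eqVneq b (hi - 1)) => hne; [done|]; apply: (hhi b); [lia|done]).
have [p hp] : exists p, forall b, beta (s' + 1) p b <-> (beta s' p' b \/ b = hi - 1).
  apply: beta_top => x /hQ [hPx hx]; case: (ltrP x (hi - 1)) => // hx'.
  case: (eqVneq x (hi - 1)) => hne; [done|]; case: (hhi x) => //; lia.
exists (s' + 1), p => b; rewrite hp hQ; split.
- by move=> [[]|->].
- move=> hb; case: (classic (b = hi - 1)) => hb'; [by right|by left].
Qed.

Lemma exists_beta (P : int -> Prop) K : bounded P K -> exists s p, forall b, beta s p b <-> P b.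
Proof.
move=> [h1 h2]; apply: (@exists_beta_lohi (K + K) P (- K%:Z) K%:Z) => //; lia.
Qed.


Lemma mod_bounds (b : int) (e : nat) : (0 < e)%N -> 0 <= (b %% e%:Z)%Z < e%:Z.
Proof. move=> he; rewrite modz_ge0 ?ltz_pmod //=; lia. Qed.

Lemma psi_surj e r b : (0 < e)%N -> (0 < r)%N -> psi e r (kid e r b).+1 (zid e r b) = b.
Proof.
move=> he hr; rewrite /psi /zid /kid.
have hm := mod_bounds b he.
rewrite (divCI _ he hm) (modCI _ he hm).
have hj := mod_bounds (b %/ e%:Z)%Z hr.
set q := (b %/ e%:Z)%Z.
have hq := divz_eq q r%:Z.
have hb := divz_eq b e%:Z.
rewrite -/q in hb.
set a := (q %/ r%:Z)%Z in hq *; set j := (q %% r%:Z)%Z in hq hj *.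
have -> : (r.-1 - absz j)%N.+1%:Z = r%:Z - j by lia.
have -> : ((a + 1) * r%:Z - (r%:Z - j)) = q by rewrite hq; lia.
by rewrite {2}hb.
Qed.

Lemma kid_lt e r b : (0 < r)%N -> (kid e r b < r)%N.
Proof. rewrite /kid; lia. Qed.

Lemma psi_bound e r (K0 : nat) k z : (0 < e)%N -> (0 < r)%N -> (k < r)%N -> z < K0%:Z ->
  psi e r k.+1 z < ((K0 + 2) * r * e)%N%:Z.
Proof.
move=> he hr hk hz; rewrite /psi.
have hm := mod_bounds z he; have hb := divz_eq z e%:Z.
set a := (z %/ e%:Z)%Z in hb *; set i := (z %% e%:Z)%Z in hb hm *.
have ha : a < K0%:Z by nia.
rewrite !PoszM; nia.
Qed.

Lemma zid_bound e r (K0 : nat) b : (0 < e)%N -> (0 < r)%N ->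
  b < - ((K0 + 2) * r * e)%N%:Z -> zid e r b < - K0%:Z.
Proof.
move=> he hr hb; rewrite /zid.
have hm := mod_bounds b he; have hbq := divz_eq b e%:Z.
set q := (b %/ e%:Z)%Z in hbq *; set i := (b %% e%:Z)%Z in hbq hm *.
have hj := mod_bounds q hr; have hq := divz_eq q r%:Z.
set a := (q %/ r%:Z)%Z in hq *; set j := (q %% r%:Z)%Z in hq hj *.
move: hb; rewrite !PoszM => hb.
have ha : a < - (K0%:Z + 2) by nia.
nia.
Qed.

Lemma Cset_iff e B (i : nat) c : (i < e)%N ->
  Cset e B i c <-> B (c * e%:Z + i%:Z).
Proof.
move=> hi; have he : (0 < e)%N by lia.
have hi' : 0 <= i%:Z < e%:Z by lia.
split.
- move=> [b [hB [hm ->]]]; have := divz_eq b e%:Z; rewrite hm => hb.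
  have -> : ((b - i%:Z) %/ e%:Z)%Z = (b %/ e%:Z)%Z.
    by rewrite {1}hb addrK mulzK //; lia.
  by rewrite -hb.
- move=> hB; exists (c * e%:Z + i%:Z); split => //; split; first exact: modCI.
  by rewrite addrK mulzK //; lia.
Qed.

Lemma Cset_bounded e B (i : nat) K : (i < e)%N -> bounded B K -> bounded (Cset e B i) K.
Proof.
move=> hi [h1 h2]; split=> c hc; rewrite Cset_iff //.
- apply: h1; nia.
- apply: h2; nia.
Qed.

Lemma eta_spec e (c : conf) : (0 < e)%N ->
  forall i : 'I_e, forall z, beta ((eta e c).2 i) ((eta e c).1 i) z <-> Cset e (beta c.2 c.1) i z.
Proof.
move=> he.
pose P := fun rt : mconf e => forall i z, beta (rt.2 i) (rt.1 i) z <-> Cset e (beta c.2 c.1) i z.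
suff : P (eta e c) by [].
apply: epsilon_spec.
have H : forall i : 'I_e, exists sp : conf, forall z, beta sp.2 sp.1 z <-> Cset e (beta c.2 c.1) i z.
  move=> i.
  have hb : bounded (beta c.2 c.1) (Kp c.1 c.2) by apply: beta_bounded.
  have hb' := Cset_bounded (ltn_ord i) hb.
  have [s [p hp]] := exists_beta hb'.
  by exists (p, s).
exists ([ffun i => (proj1_sig (constructive_indefinite_description _ (H i))).1],
        [ffun i => (proj1_sig (constructive_indefinite_description _ (H i))).2]).
move=> i z /=; rewrite !ffunE.
by case: (constructive_indefinite_description _ (H i)) => sp hsp /=.
Qed.

Definition KU e r (c : mconf r) : nat := ((\sum_(k < r) Kp (c.1 k) (c.2 k)) + 2) * r * e.

Lemma Uglov_bounded e r (c : mconf r) : (0 < e)%N -> (0 < r)%N -> bounded (Uglov_set e r c) (KU e c).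
Proof.
move=> he hr; set K0 := \sum_(k < r) Kp (c.1 k) (c.2 k).
have hK : forall k, (Kp (c.1 k) (c.2 k) <= K0)%N.
  by move=> k; rewrite /K0 (bigD1 k) //= leq_addr.
split=> b hb.
- exists (Ordinal (kid_lt e b hr)), (zid e r b); split; last by rewrite /= psi_surj.
  apply: (beta_bounded (hK _)).1; apply: zid_bound => //.
- move=> [k [z [hz hbz]]].
  have hzK : z < K0%:Z.
    case: (ltrP z K0%:Z) => // hz'; case: ((beta_bounded (hK k)).2 z hz' hz).
  have := psi_bound he hr (ltn_ord k) hzK; rewrite -hbz; rewrite /KU -/K0 in hb; lia.
Qed.

Lemma Psi_spec e r (c : mconf r) : (0 < e)%N -> (0 < r)%N ->
  forall b, beta (Psi e r c).2 (Psi e r c).1 b <-> Uglov_set e r c b.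
Proof.
move=> he hr.
pose P := fun p : conf => forall b, beta p.2 p.1 b <-> Uglov_set e r c b.
suff : P (Psi e r c) by [].
apply: epsilon_spec.
have [s [p hp]] := exists_beta (Uglov_bounded c he hr).
by exists (p, s).
Qed.

Lemma Uglov_comp e r (c : mconf r) (B : int -> Prop) : (0 < e)%N ->
  (forall b, B b <-> Uglov_set e r c b) ->
  forall (k : 'I_r) z, beta (c.2 k) (c.1 k) z <-> B (psi e r k.+1 z).
Proof.
move=> he hB k z; rewrite hB; split.
- by move=> h; exists k, z.
- move=> [k' [z' [h' heq]]].
  have [h1 h2] := psi_inv z he (ltn_ord k).
  have [h1' h2'] := psi_inv z' he (ltn_ord k').
  rewrite heq in h1 h2.
  have ek : k = k' by apply: val_inj; rewrite /= -h1 h1'.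
  have ez : z = z' by rewrite -h2 h2'.
  by rewrite ek ez.
Qed.

Lemma D_bounded e r (B : int -> Prop) K (k : nat) : (0 < e)%N -> (0 < r)%N -> (k < r)%N ->
  bounded B K -> bounded (fun z => B (psi e r k.+1 z)) (K + e).
Proof.
move=> he hr hk [h1 h2]; split => z hz.
- apply: h1; rewrite /psi.
  have hm := mod_bounds z he; have hb := divz_eq z e%:Z.
  set a := (z %/ e%:Z)%Z in hb *; set i := (z %% e%:Z)%Z in hb hm *.
  have ha : a < 0 by nia.
  nia.
- apply: h2; rewrite /psi.
  have hm := mod_bounds z he; have hb := divz_eq z e%:Z.
  set a := (z %/ e%:Z)%Z in hb *; set i := (z %% e%:Z)%Z in hb hm *.
  have ha : K%:Z <= a * e%:Z + 0 by nia.
  nia.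
Qed.

Lemma Psi_surj e r (p : conf) : (0 < e)%N -> (0 < r)%N -> exists c, Psi e r c = p.
Proof.
move=> he hr.
have hB : bounded (beta p.2 p.1) (Kp p.1 p.2) by apply: beta_bounded.
have H : forall k : 'I_r, exists sp : conf, forall z, beta sp.2 sp.1 z <-> beta p.2 p.1 (psi e r k.+1 z).
  move=> k; have [s [q hq]] := exists_beta (D_bounded he hr (ltn_ord k) hB).
  by exists (q, s).
pose c : mconf r := ([ffun k => (proj1_sig (constructive_indefinite_description _ (H k))).1],
        [ffun k => (proj1_sig (constructive_indefinite_description _ (H k))).2]).
have hc : forall (k : 'I_r) z, beta (c.2 k) (c.1 k) z <-> beta p.2 p.1 (psi e r k.+1 z).
  move=> k z /=; rewrite !ffunE.
  by case: (constructive_indefinite_description _ (H k)) => sp hsp /=.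
exists c.
have hU : forall b, beta p.2 p.1 b <-> Uglov_set e r c b.
  move=> b; split.
  - move=> hb; exists (Ordinal (kid_lt e b hr)), (zid e r b).
    by rewrite hc /= psi_surj.
  - by move=> [k [z [hz ->]]]; rewrite -hc.
have [h1 h2] : (Psi e r c).2 = p.2 /\ (Psi e r c).1 = p.1.
  apply: beta_inj => b; rewrite Psi_spec // hU //.
by case: (Psi e r c) h1 h2 => a b /= -> ->; case: p {hB H c hc hU}.
Qed.

Lemma Phi_spec e r (p : conf) : (0 < e)%N -> (0 < r)%N ->
  forall (k : 'I_r) z, beta ((Phi e r p).2 k) ((Phi e r p).1 k) z <-> beta p.2 p.1 (psi e r k.+1 z).
Proof.
move=> he hr.
have hP : Psi e r (Phi e r p) = p.
  rewrite /Phi; apply: (epsilon_spec (inhabits (default_mconf r)) (fun c => Psi e r c = p)).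
  exact: Psi_surj.
apply: Uglov_comp => // b; rewrite -Psi_spec // hP //.
Qed.


Lemma size_res1 N p s : size (res_seq1 N p s) = psize p.
Proof.
rewrite /res_seq1 size_allpairs_dep /psize.
have -> : [seq size (iota 1 (part_nth p x)) | x <- iota 1 (size (sval p))] =
          [seq part_nth p x | x <- iota 1 (size (sval p))].
  by apply: eq_map => x; rewrite size_iota.
have -> : iota 1 (size (sval p)) = map succn (iota 0 (size (sval p))) by rewrite -(iotaDl 1).
rewrite -map_comp.
have -> : [seq (part_nth p \o succn) i | i <- iota 0 (size (sval p))] = mkseq (nth 0%N (sval p)) (size (sval p)).
  by [].
by rewrite mkseq_nth.
Qed.

Lemma size_res N m c : size (res_seq N m c) = mpsize m c.1.
Proof.
rewrite /res_seq size_flatten /shape -map_comp /mpsize sumnE big_map big_enum /=.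
by apply: eq_bigr => k _; rewrite size_res1.
Qed.

Lemma count_res N m c j : (count_mem j (res_seq N m c))%:Z =
  \sum_(k < m) (count_mem j (res_seq1 N (c.1 k) (c.2 k)))%:Z.
Proof.
rewrite /res_seq count_flatten -map_comp sumnE big_map big_enum /=.
by rewrite -(big_morph _ PoszD (erefl (0%:Z))).
Qed.

Lemma res1_range N p s x : (0 < N)%N -> x \in res_seq1 N p s -> 0 <= x < N%:Z.
Proof.
move=> hN; rewrite /res_seq1 => /flattenP [row /mapP [y _ ->] /mapP [z _ ->]].
exact: mod_bounds.
Qed.

Lemma res_range N m c x : (0 < N)%N -> x \in res_seq N m c -> 0 <= x < N%:Z.
Proof.
move=> hN; rewrite /res_seq => /flattenP [row /mapP [k _ ->]]; exact: res1_range.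
Qed.

Lemma block_eqE N m c d : (0 < N)%N ->
  block_eq N m c d <-> c.2 = d.2 /\
    forall j, 0 <= j < N%:Z -> (count_mem j (res_seq N m c))%:Z = (count_mem j (res_seq N m d))%:Z.
Proof.
move=> hN; split.
- move=> [h1 [_ h3]]; split => // j _; by rewrite (permP h3).
- move=> [h1 h2]; have hp : perm_eq (res_seq N m c) (res_seq N m d).
    rewrite /perm_eq; apply/allP => x hx; apply/eqP.
    have hx' : 0 <= x < N%:Z by move: hx; rewrite mem_cat => /orP [] /res_range; apply.
    by have := h2 x hx' => [[]].
  split => //; split => //.
  by rewrite -(size_res N c) -(size_res N d) (perm_size hp).
Qed.


Lemma P1 (N : nat) (i : nat) (b : int) : (i < N)%N ->
  ((absz (b %% N%:Z)%Z == i) : int) = phi N i%:Z b - phi N i.+1%:Z b.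
Proof.
move=> hi; have hN : (0 < N)%N by lia.
rewrite /phi; have -> : b - i%:Z = (b - i.+1%:Z) + 1 by lia.
rewrite div_step // addrAC subrr add0r.
have -> : b - i.+1%:Z + 1 = b - i%:Z by lia.
rewrite mod_sub //; last lia.
Qed.

Lemma P2 (N : nat) b : (0 < N)%N -> phi N N%:Z b = phi N 0 b - 1.
Proof.
move=> hN; rewrite /phi subr0.
have -> : b - N%:Z = (-1) * N%:Z + b by lia.
rewrite divzMDl; lia.
Qed.

Lemma P3 e r (k : nat) b : (0 < r)%N -> (k < r)%N ->
  ((kid e r b == k) : int) = phi r (r.-1 - k)%N%:Z (b %/ e%:Z)%Z - phi r (r - k)%N%:Z (b %/ e%:Z)%Z.
Proof.
move=> hr hk; have -> : (r - k)%N = (r.-1 - k).+1 by lia.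
rewrite -P1; last lia.
have := mod_bounds (b %/ e%:Z)%Z hr; rewrite /kid.
case: eqP; case: eqP => //; lia.
Qed.

Lemma P4 e r (j : int) b : (0 < e)%N -> (0 < r)%N -> 0 <= j < e%:Z ->
  phi e j (zid e r b) = phi r 0 (b %/ e%:Z)%Z + phi e j b - phi e 0 b.
Proof.
move=> he hr hj; rewrite /phi /zid !subr0.
have hm := mod_bounds b he.
set q := (b %/ e%:Z)%Z; set i := (b %% e%:Z)%Z.
have hb : b = q * e%:Z + i by rewrite /q /i -divz_eq.
have -> : (q %/ r%:Z)%Z * e%:Z + i - j = (q %/ r%:Z)%Z * e%:Z + (i - j) by lia.
rewrite divzMDl; last lia.
have -> : b - j = q * e%:Z + (i - j) by lia.
rewrite divzMDl; last lia.
lia.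
Qed.

Lemma res_shift N p s s0 : (0 < N)%N ->
  res_seq1 N p s = map (fun v => ((v + (s - s0)) %% N%:Z)%Z) (res_seq1 N p s0).
Proof.
move=> hN; rewrite /res_seq1 map_flatten -map_comp; congr flatten.
apply: eq_map => x /=; rewrite -map_comp; apply: eq_map => y /=.
rewrite modzDml; congr (_ %% _)%Z; lia.
Qed.


Lemma final_logic (r : nat) (Y : nat -> int) : (0 < r)%N -> Y r = Y 0%N ->
  (forall j, (j < r)%N -> Y j = 0) <->
  ((forall k, (k < r)%N -> Y (r.-1 - k)%N - Y (r - k)%N = 0) /\ Y 0%N = 0).
Proof.
move=> hr hY; split.
- move=> h; have h0 : Y 0%N = 0 by exact: (h 0%N hr).
  split => //.
  move=> k hk; rewrite h; last lia.
  case: (ltnP (r - k) r) => hrk; first by rewrite h.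
  have -> : (r - k)%N = r by lia.
  by rewrite hY h0 subrr.
- move=> [h h0].
  have H : forall n, (n <= r)%N -> Y (r - n)%N = 0.
    elim=> [|n IH] hn; first by rewrite subn0 hY.
    have := h n ltac:(lia); rewrite IH; last lia.
    have -> : (r.-1 - n)%N = (r - n.+1)%N by lia.
    by rewrite subr0.
  move=> j hj; have := H (r - j)%N ltac:(lia).
  by have -> : (r - (r - j))%N = j by lia.
Qed.

Lemma sum_pick (n : nat) (i : 'I_n) (F : 'I_n -> int) :
  \sum_(i' < n) ((i' == i) : int) * F i' = F i.
Proof.
rewrite (bigD1 i) //= eqxx mul1r big1 ?addr0 // => i' hi'.
by rewrite (negbTE hi') mul0r.
Qed.

Unset Implicit Arguments.

Theorem theorem2p13 (e r : nat) (he : (2 <= e)%N) (hr : (2 <= r)%N)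
    (lam mu : Partition) (hsim : sim_e e lam mu) (s : int) :
  block_eq r e (eta e (lam, s)) (eta e (mu, s)) <->
  block_eq e r (Phi e r (lam, s)) (Phi e r (mu, s)).
Proof.
have he0 : (0 < e)%N by lia.
have hr0 : (0 < r)%N by lia.
set B := beta s lam; set B' := beta s mu.
set Kl := (Kp lam s + Kp mu s)%N.
have hKl : (Kp lam s <= Kl)%N /\ (Kp mu s <= Kl)%N by rewrite /Kl; lia.
have hbB : bounded B Kl by apply: beta_bounded; lia.
have hbB' : bounded B' Kl by apply: beta_bounded; lia.
have hsimD : forall j, 0 <= j < e%:Z -> Dl B B' Kl (phi e j) = 0.
  move=> j hj; case: hsim => s0 [_ [_ hp]] /=; rewrite /= in hp.
  have hp' : perm_eq (res_seq1 e lam s) (res_seq1 e mu s).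
    by rewrite (res_shift lam s s0 he0) (res_shift mu s s0 he0) perm_map.
  rewrite -count_diff //; [|lia|lia]; by rewrite (permP hp') subrr.
have hD1 : Dl B B' Kl (fun _ => 1) = 0 by rewrite -charge_diff ?subrr //; lia.
have grow : forall K h, (Kl <= K)%N -> Dl B B' K h = Dl B B' Kl h.
  by move=> K h hK; apply: Dl_grow.
pose X (j : nat) := Dl B B' Kl (fun b => phi r j%:Z (b %/ e%:Z)%Z).
have hXr : X r = X 0%N.
  rewrite /X (Dl_ext _ _ _ (fun b => P2 (b %/ e%:Z)%Z hr0)) DlB hD1 subr0.
  done.
set ce := eta e (lam, s); set de := eta e (mu, s).
have hce := eta_spec (lam, s) he0; have hde := eta_spec (mu, s) he0.
rewrite -/ce /= -/B in hce; rewrite -/de /= -/B' in hde.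
set Ke := (\sum_(i < e) (Kp (ce.1 i) (ce.2 i) + Kp (de.1 i) (de.2 i)) + Kl)%N.
have hKe : forall i, (Kp (ce.1 i) (ce.2 i) <= Ke)%N /\ (Kp (de.1 i) (de.2 i) <= Ke)%N.
  move=> i; rewrite /Ke (bigD1 i) //=; lia.
have hCe : forall i c, (i < e)%N -> (Cset e B i c <-> B (c * e%:Z + i%:Z)) by move=> *; apply: Cset_iff.
have hCe' : forall i c, (i < e)%N -> (Cset e B' i c <-> B' (c * e%:Z + i%:Z)) by move=> *; apply: Cset_iff.
have hGe : (Kl <= Ke * e)%N by rewrite /Ke; nia.
have hceq : ce.2 = de.2.
  apply/ffunP => i; apply/eqP; rewrite -subr_eq0; apply/eqP.
  rewrite (charge_diff (hKe i).1 (hKe i).2).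
  rewrite (Dl_extP _ _ (hce i) (hde i)).
  have := @eta_transfer e Ke B B' (fun i => Cset e B i) (fun i => Cset e B' i)
            (fun i' _ => ((i' == i :> nat) : int)) he0 hCe hCe'.
  rewrite /=.
  rewrite (eq_bigr (fun i' => ((i' == i) : int) * Dl (Cset e B i') (Cset e B' i') Ke (fun _ => 1)));
    last by move=> i' _; rewrite DlC.
  rewrite sum_pick => ->; rewrite grow //.
  rewrite (Dl_ext _ _ _ (fun b => P1 b (ltn_ord i))) DlB.
  rewrite hsimD; last by have := ltn_ord i; lia.
  case: (ltnP i.+1 e) => hi1; first by rewrite hsimD ?subrr //; lia.
  have -> : i.+1 = e by have := ltn_ord i; lia.
  rewrite (Dl_ext _ _ _ (fun b => P2 b he0)) DlB hsimD ?hD1 ?subrr //; lia.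
rewrite hceq in hce hKe.
have hetaX : forall j : nat, (j < r)%N ->
    (count_mem j%:Z (res_seq r e ce))%:Z - (count_mem j%:Z (res_seq r e de))%:Z = X j.
  move=> j hj; rewrite !count_res -sumrB.
  have hj' : 0 <= j%:Z < r%:Z by lia.
  transitivity (\sum_(i < e) Dl (Cset e B i) (Cset e B' i) Ke (phi r j%:Z)).
    apply: eq_bigr => i _; rewrite hceq (count_diff hr0 hj' (hKe i).1 (hKe i).2).
    exact: (Dl_extP _ _ (hce i) (hde i)).
  rewrite (@eta_transfer e Ke B B' (fun i => Cset e B i) (fun i => Cset e B' i)
            (fun _ => phi r j%:Z) he0 hCe hCe').
  by rewrite grow.
have hEta : block_eq r e ce de <-> (forall j, (j < r)%N -> X j = 0).
  rewrite block_eqE //; split.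
  - move=> [_ h] j hj; rewrite -hetaX // h ?subrr //; lia.
  - move=> h; split => // j hj; apply/eqP; rewrite -subr_eq0; apply/eqP.
    have -> : j = (absz j)%:Z by lia.
    rewrite hetaX ?h //; lia.
set cp := Phi e r (lam, s); set dp := Phi e r (mu, s).
have hcp := Phi_spec (lam, s) he0 hr0; have hdp := Phi_spec (mu, s) he0 hr0.
rewrite -/cp /= -/B in hcp; rewrite -/dp /= -/B' in hdp.
set KP := (\sum_(k < r) (Kp (cp.1 k) (cp.2 k) + Kp (dp.1 k) (dp.2 k)) + Kl)%N.
have hKP : forall k, (Kp (cp.1 k) (cp.2 k) <= KP * e)%N /\ (Kp (dp.1 k) (dp.2 k) <= KP * e)%N.
  have hKP0 : forall k, (Kp (cp.1 k) (cp.2 k) <= KP)%N /\ (Kp (dp.1 k) (dp.2 k) <= KP)%N.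
    move=> k; rewrite /KP (bigD1 k) //=; lia.
  move=> k; split; apply: leq_trans (leq_pmulr _ he0); [exact: (hKP0 k).1|exact: (hKP0 k).2].
have hGP : (Kl <= KP * r * e)%N.
  apply: leq_trans (leq_pmulr _ he0); apply: leq_trans (leq_pmulr _ hr0); rewrite /KP; lia.
have hD : forall k z, (k < r)%N -> (B (psi e r k.+1 z) <-> B (psi e r k.+1 z)) by [].
have hD' : forall k z, (k < r)%N -> (B' (psi e r k.+1 z) <-> B' (psi e r k.+1 z)) by [].
have hcharge : forall k : 'I_r, cp.2 k - dp.2 k = X (r.-1 - k)%N - X (r - k)%N.
  move=> k.
  rewrite (charge_diff (hKP k).1 (hKP k).2) (Dl_extP _ _ (hcp k) (hdp k)).
  have := @phi_transfer e r KP B B' (fun k z => B (psi e r k.+1 z)) (fun k z => B' (psi e r k.+1 z))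
            (fun k' _ => ((k' == k :> nat) : int)) he0 hr0 hD hD'.
  rewrite /=.
  rewrite (eq_bigr (fun k' => ((k' == k) : int) *
       Dl (fun z => B (psi e r k'.+1 z)) (fun z => B' (psi e r k'.+1 z)) (KP * e) (fun _ => 1)));
    last by move=> k' _; rewrite DlC.
  rewrite sum_pick => ->; rewrite grow //.
  rewrite (Dl_ext _ _ _ (fun b => P3 e b hr0 (ltn_ord k))) DlB.
  done.
have hres : cp.2 = dp.2 -> forall j : int, 0 <= j < e%:Z ->
    (count_mem j (res_seq e r cp))%:Z - (count_mem j (res_seq e r dp))%:Z = X 0%N.
  move=> hpeq j hj; rewrite !count_res -sumrB.
  transitivity (\sum_(k < r) Dl (fun z => B (psi e r k.+1 z)) (fun z => B' (psi e r k.+1 z))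
                   (KP * e) (phi e j)).
    apply: eq_bigr => k _.
    have hk1 : (Kp (cp.1 k) (dp.2 k) <= KP * e)%N by rewrite -hpeq; exact: (hKP k).1.
    rewrite hpeq (count_diff he0 hj hk1 (hKP k).2).
    apply: Dl_extP => z; [rewrite -hpeq; exact: hcp| exact: hdp].
  rewrite (@phi_transfer e r KP B B' (fun k z => B (psi e r k.+1 z)) (fun k z => B' (psi e r k.+1 z))
            (fun _ => phi e j) he0 hr0 hD hD').
  rewrite grow // (Dl_ext _ _ _ (fun b => P4 b he0 hr0 hj)) DlB DlD.
  rewrite hsimD // (hsimD 0); last lia.
  by rewrite subr0 addr0.
have hPhi : block_eq e r cp dp <->
    ((forall k, (k < r)%N -> X (r.-1 - k)%N - X (r - k)%N = 0) /\ X 0%N = 0).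
  rewrite block_eqE //; split.
  - move=> [hpeq h]; split.
      move=> k hk; rewrite -(hcharge (Ordinal hk)) hpeq subrr //.
    by rewrite -(hres hpeq 0) ?h ?subrr //; lia.
  - move=> [h1 h0].
    have hpeq : cp.2 = dp.2.
      apply/ffunP => k; apply/eqP; rewrite -subr_eq0 hcharge h1 //.
    split => // j hj; apply/eqP; rewrite -subr_eq0 hres // h0 //.
rewrite hEta hPhi; exact: final_logic.
Qed.
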